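(* Let $\langle S,L,\tau,\ell\rangle$ be a labelled Markov chain and let $R$ be a bisimulation with $\simeq\,\subseteq R\subseteq\,\sim$. For all $s,t,u\in S$ with $(s,t)\in\mathrm{Filter}(R)$ and $(t,u)\in\mathrm{Filter}(R)$, if $s\simeq t$ or $t\simeq u$, then $(s,u)\in\mathrm{Filter}(R)$.
   Context: Labelled Markov chain $\langle S,L,\tau,\ell\rangle$: finite $S$, finite $L$, $\tau:S\to\mathcal{D}(S)$, $\ell:S\to L$, $|\ell(S)|\ge2$. $\Omega(\mu,\nu)$ = couplings (distributions on $S\times S$ with marginals $\mu,\nu$). A bisimulation is an equivalence relation $R\subseteq S\times S$ such that for all $(s,t)\in R$, $\ell(s)=\ell(t)$ and some $\omega\in\Omega(\tau(s),\tau(t))$ has $\mathrm{support}(\omega)\subseteq R$; $\sim$ is bisimilarity (union of all bisimulations). $S^2_\Delta=\{(s,s)\}$, $S^2_1=\{(s,t)\mid\ell(s)\ne\ell(t)\}$. A policy is $P:S\times S\to\mathcal{D}(S\times S)$ with $P(s,t)\in\Omega(\tau(s),\tau(t))$ for $(s,t)\notin S^2_1$ and $P(s,t)$ the point mass at $(s,t)$ for $(s,t)\in S^2_1$; $\mathcal{P}$ = set of policies, inducing Markov chains $\langle S\times S,P\rangle$. Robust bisimilarity: $s\simeq t$ iff some $P\in\mathcal{P}$ makes $(s,t)$ reach $S^2_\Delta$ with probability $1$ in $\langle S\times S,P\rangle$. $R$ supports a path $(u_1,v_1)\dots(u_n,v_n)$ of $\langle S\times S,P\rangle$ if $(u_i,v_i)\in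 R$ and $\mathrm{support}(P(u_i,v_i))\subseteq R$ for all $i$. $\mathrm{Filter}(R)=\{(s,t)\in R\mid\exists P\in\mathcal{P}$ such that $R$ supports a path from $(s,t)$ to $S^2_\Delta$ in $\langle S\times S,P\rangle\}$. *)

(* Defs.v *)
From mathcomp Require Import all_boot all_order all_algebra.
From mathcomp Require Import reals.
Set Implicit Arguments. Unset Strict Implicit. Unset Printing Implicit Defensive.
Import Order.TTheory GRing.Theory Num.Theory.
Local Open Scope ring_scope.

Section LMC.
Variable R : realType.

Definition is_distr (X : finType) (mu : {ffun X -> R}) : Prop :=
  (forall x, 0 <= mu x) /\ \sum_x mu x = 1.

Definition support (X : finType) (mu : {ffun X -> R}) : pred X :=
  fun x => mu x != 0.

Variable S : finType.

Definition coupling (mu nu : {ffun S -> R}) (w : {ffun (S * S) -> R}) : Prop :=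
  is_distr w /\
  (forall x, \sum_y w (x, y) = mu x) /\
  (forall y, \sum_x w (x, y) = nu y).

Variable L : finType.
Variable tau : S -> {ffun S -> R}.
Variable ell : S -> L.

Definition equivalence (B : rel S) : Prop :=
  (forall s, B s s) /\ (forall s t, B s t -> B t s) /\
  (forall s t u, B s t -> B t u -> B s u).

Definition bisimulation (B : rel S) : Prop :=
  equivalence B /\
  forall s t, B s t -> ell s = ell t /\
    exists w, coupling (tau s) (tau t) w /\
      (forall p, support w p -> B p.1 p.2).

Definition bisimilar (s t : S) : Prop :=
  exists B, bisimulation B /\ B s t.

Definition diag (p : S * S) : bool := p.1 == p.2.
Definition difflab (p : S * S) : bool := ell p.1 != ell p.2.

Definition policy (P : S * S -> {ffun (S * S) -> R}) : Prop :=
  forall p, if difflab p then P p = [ffun q => if q == p then 1 else 0]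
            else coupling (tau p.1) (tau p.2) (P p).

Fixpoint reachn (X : finType) (P : X -> {ffun X -> R}) (T : pred X) (n : nat)
  (x : X) : R :=
  if T x then 1 else
  match n with
  | 0 => 0
  | n'.+1 => \sum_y P x y * reachn P T n' y
  end.

(* reaching T with probability 1: the supremum over n of the probabilities
   of reaching T within n steps equals 1 (these are all <= 1) *)
Definition reach_as (X : finType) (P : X -> {ffun X -> R}) (T : pred X) (x : X)
  : Prop := forall e : R, 0 < e -> exists n, 1 - e <= reachn P T n x.

Definition robust (s t : S) : Prop :=
  exists P, policy P /\ reach_as P diag (s, t).

Definition supports (B : rel S) (P : S * S -> {ffun (S * S) -> R})
  (x : S * S) (p : seq (S * S)) : Prop :=
  path (fun a b => 0 < P a b) x p /\
  forall q, q \in x :: p -> B q.1 q.2 /\ (forall r, support (P q) r -> B r.1 r.2).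

Definition Filter (B : rel S) (s t : S) : Prop :=
  B s t /\ exists P, policy P /\
    exists p : seq (S * S), supports B P (s, t) p /\ diag (last (s, t) p).

End LMC.

(* Main.v *)
Require Import Defs.
From mathcomp Require Import all_boot all_order all_algebra.
From mathcomp Require Import reals.
From mathcomp Require Import ring lra.
From Stdlib Require Import Classical ClassicalEpsilon.
Import Order.TTheory GRing.Theory Num.Theory.
Local Open Scope ring_scope.
Set Implicit Arguments. Unset Strict Implicit.

Lemma policy_distr (R : realType) (S L : finType)
  (tau : S -> {ffun S -> R}) (ell : S -> L) P :
  policy tau ell P -> forall p, is_distr (P p).
Proof.
move=> HP p; have := HP p; case: ifP => _.
  move=> ->; split; first by move=> q; rewrite ffunE; case: eqP.
  rewrite (bigD1 p) //= ffunE eqxx big1 ?addr0 // => q /negPf hq.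
  by rewrite ffunE hq.
by case.
Qed.

Lemma reachn_bounds (R : realType) (X : finType) (P : X -> {ffun X -> R})
  (HP : forall x, is_distr (P x)) T n x :
  0 <= reachn P T n x <= 1.
Proof.
elim: n x => [|n IH] x /=; case: (T x) => //=; rewrite ?lexx ?ler01 //.
apply/andP; split.
  by apply: sumr_ge0 => y _; apply: mulr_ge0; [case: (HP x)|case/andP: (IH y)].
rewrite -(proj2 (HP x)); apply: ler_sum => y _.
rewrite -[leRHS]mulr1; apply: ler_wpM2l; first by case: (HP x).
by case/andP: (IH y).
Qed.
Lemma reach_succ (R : realType) (X : finType) (P : X -> {ffun X -> R})
  (HP : forall x, is_distr (P x)) (T : pred X) q r :
  ~~ T q -> reach_as P T q -> 0 < P q r -> reach_as P T r.
Proof.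
move=> nTq Hq Pqr e e0.
apply: NNPP => Hn.
have Hlt : forall n, reachn P T n r < 1 - e.
  move=> n; rewrite ltNge; apply/negP => H; apply: Hn; by exists n.
have e1 : e < 1.
  have := Hlt 0%N; have := @reachn_bounds _ _ _ HP T 0 r; case/andP=> + _; lra.
have c1 : P q r <= 1.
  rewrite -(proj2 (HP q)) (bigD1 r) //= lerDl.
  by apply: sumr_ge0 => y _; case: (HP q).
have ce : 0 < P q r * e / 2 by rewrite divr_gt0 // mulr_gt0.
have [n Hn2] := Hq _ ce.
move: Hn2; case: n => [|n] /=; rewrite (negPf nTq).
  move=> H; nra.
have : \sum_y P q y * reachn P T n y <= 1 - P q r * e.
  rewrite (bigD1 r) //=.
  have H1 : \sum_(y | y != r) P q y * reachn P T n y <= \sum_(y | y != r) P q y.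
    apply: ler_sum => y _; rewrite -[leRHS]mulr1; apply: ler_wpM2l; first by case: (HP q).
    by case/andP: (@reachn_bounds _ _ _ HP T n y).
  have H2 : \sum_(y | y != r) P q y = 1 - P q r.
    rewrite -(proj2 (HP q)) [in RHS](bigD1 r) //=. by rewrite addrC addrK.
  have H3 := Hlt n.
  nra.
move=> H H'; nra.
Qed.
Lemma coupling_le_r (R : realType) (S : finType) (mu nu : {ffun S -> R}) W a b :
  coupling mu nu W -> W (a, b) <= nu b.
Proof.
move=> [[W0 _] [_ H2]]; rewrite -H2 (bigD1 a) //= lerDl.
by apply: sumr_ge0 => ? _.
Qed.

Lemma coupling_ge0_r (R : realType) (S : finType) (mu nu : {ffun S -> R}) W b :
  coupling mu nu W -> 0 <= nu b.
Proof. move=> [[W0 _] [_ H2]]; rewrite -H2; by apply: sumr_ge0. Qed.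

Lemma glue (R : realType) (S : finType) (mu nu xi : {ffun S -> R}) W1 W2 :
  coupling mu nu W1 -> coupling nu xi W2 -> is_distr mu ->
  exists w, coupling mu xi w /\
    (forall a c, w (a, c) != 0 -> exists b, W1 (a, b) != 0 /\ W2 (b, c) != 0) /\
    (forall a b c, 0 < W1 (a, b) -> 0 < W2 (b, c) -> 0 < w (a, c)).
Proof.
move=> C1 C2 Dmu.
have W1ge0 : forall p, 0 <= W1 p by case: C1 => [[]].
have W2ge0 : forall p, 0 <= W2 p by case: C2 => [[]].
have nuge0 : forall b, 0 <= nu b by move=> b; apply: (@coupling_ge0_r _ _ _ _ _ b C1).
pose w := [ffun p : S * S => \sum_b W1 (p.1, b) * W2 (b, p.2) / nu b].
have wE : forall a c, w (a, c) = \sum_b W1 (a, b) * W2 (b, c) / nu b.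
  by move=> a c; rewrite ffunE.
have m1 : forall a, \sum_c w (a, c) = mu a.
  move=> a; under eq_bigr do rewrite wE.
  rewrite exchange_big /= -(proj1 (proj2 C1) a); apply: eq_bigr => b _.
  under eq_bigr do rewrite mulrAC.
  rewrite -mulr_sumr (proj1 (proj2 C2) b).
  have [nb0|nz] := eqVneq (nu b) 0.
    have : W1 (a, b) <= 0 by rewrite -nb0; apply: (@coupling_le_r _ _ _ _ _ a b C1).
    move=> h; have -> : W1 (a, b) = 0 by apply/eqP; rewrite eq_le h W1ge0.
    by rewrite !mul0r.
  by rewrite -mulrA mulVf // mulr1.
have m2 : forall c, \sum_a w (a, c) = xi c.
  move=> c; under eq_bigr do rewrite wE.
  rewrite exchange_big /= -(proj2 (proj2 C2) c); apply: eq_bigr => b _.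
  under eq_bigr do rewrite mulrAC -mulrA.
  rewrite -mulr_suml (proj2 (proj2 C1) b).
  have [nb0|nz] := eqVneq (nu b) 0.
    have : W2 (b, c) <= 0.
      rewrite -nb0.
      by case: C2 => [[_ _] [H1 _]]; rewrite -H1 (bigD1 c) //= lerDl; apply: sumr_ge0.
    move=> h; have -> : W2 (b, c) = 0 by apply/eqP; rewrite eq_le h W2ge0.
    by rewrite !mulr0.
  by rewrite mulrA divff // mul1r.
exists w; split; [split; [split|split]|split] => //.
- case=> a c; rewrite wE; apply: sumr_ge0 => b _.
  by apply: divr_ge0 => //; apply: mulr_ge0.
- transitivity (\sum_a \sum_c w (a, c)).
    by rewrite pair_bigA; apply: eq_bigr; case.
  under eq_bigr do rewrite m1.
  by case: Dmu.
- move=> a c; rewrite wE => H; apply: NNPP => Hn; move/eqP: H; apply.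
  apply: big1 => b _.
  have [h|h] := eqVneq (W1 (a, b)) 0; first by rewrite h !mul0r.
  have [h'|h'] := eqVneq (W2 (b, c)) 0; first by rewrite h' mulr0 mul0r.
  by exfalso; apply: Hn; exists b.
- move=> a b c h1 h2; rewrite wE (bigD1 b) //=.
  have hb : 0 < nu b by apply: lt_le_trans h1 (@coupling_le_r _ _ _ _ _ a b C1).
  apply: lt_le_trans (_ : 0 < W1 (a, b) * W2 (b, c) / nu b) _.
    by rewrite divr_gt0 // mulr_gt0.
  rewrite lerDl; apply: sumr_ge0 => b' _.
  by apply: divr_ge0 => //; apply: mulr_ge0.
Qed.
Definition Good (R : realType) (S L : finType) (tau : S -> {ffun S -> R}) (ell : S -> L)
  (B : rel S) (q : S * S) : Prop :=
  exists P, policy tau ell P /\ exists p, supports B P q p /\ diag (last q p).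

Lemma point_sum (R : realType) (S : finType) (f : {ffun S -> R}) a :
  \sum_c (if a == c then f a else 0) = f a.
Proof.
rewrite (bigD1 a) //= eqxx big1 ?addr0 // => c /negPf; rewrite eq_sym => ->.
by [].
Qed.

Lemma point_sum' (R : realType) (S : finType) (f : {ffun S -> R}) b :
  \sum_c (if c == b then f c else 0) = f b.
Proof.
rewrite (bigD1 b) //= eqxx big1 ?addr0 // => c /negPf -> //.
Qed.

Lemma exists_policy (R : realType) (S L : finType) (tau : S -> {ffun S -> R}) (ell : S -> L) :
  (forall s, is_distr (tau s)) -> exists P, policy tau ell P.
Proof.
move=> Hd.
exists (fun p => if difflab ell p then [ffun q => if q == p then 1 else 0]
          else [ffun q : S * S => tau p.1 q.1 * tau p.2 q.2]).
move=> p /=; case: (difflab ell p) => //.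
split; [split|split].
- by move=> q; rewrite ffunE; apply: mulr_ge0; [case: (Hd p.1)|case: (Hd p.2)].
- transitivity (\sum_a \sum_c tau p.1 a * tau p.2 c).
    by rewrite pair_bigA; apply: eq_bigr; case=> a c _; rewrite ffunE.
  under eq_bigr do rewrite -mulr_sumr (proj2 (Hd p.2)) mulr1.
  exact: (proj2 (Hd p.1)).
- by move=> x; under eq_bigr do rewrite ffunE /=; rewrite -mulr_sumr (proj2 (Hd p.2)) mulr1.
- by move=> y; under eq_bigr do rewrite ffunE /=; rewrite -mulr_suml (proj2 (Hd p.1)) mul1r.
Qed.

Lemma update_policy (R : realType) (S L : finType) (tau : S -> {ffun S -> R}) (ell : S -> L)
  P q w : policy tau ell P -> ~~ difflab ell q -> coupling (tau q.1) (tau q.2) w ->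
  policy tau ell (fun p => if p == q then w else P p).
Proof.
move=> HP nd C p; case: eqP => [->|_]; last exact: HP.
by rewrite (negPf nd).
Qed.

Lemma good_diag (R : realType) (S L : finType) (tau : S -> {ffun S -> R}) (ell : S -> L)
  (Hd : forall s, is_distr (tau s)) (B : rel S) (HB : equivalence B) q :
  diag q -> Good tau ell B q.
Proof.
case: q => x y; rewrite /diag /= => /eqP <-.
have [P0 HP0] := exists_policy ell Hd.
pose w := [ffun p : S * S => if p.1 == p.2 then tau x p.1 else 0].
have C : coupling (tau x) (tau x) w.
  split; [split|split].
  - by move=> q; rewrite ffunE; case: eqP => // _; case: (Hd x).
  - transitivity (\sum_a \sum_c w (a, c)).
      by rewrite pair_bigA; apply: eq_bigr; case.
    under eq_bigr do under eq_bigr do rewrite ffunE /=.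
    under eq_bigr do rewrite point_sum.
    exact: (proj2 (Hd x)).
  - move=> a; under eq_bigr do rewrite ffunE /=; exact: point_sum.
  - move=> b; under eq_bigr do rewrite ffunE /=; exact: point_sum'.
have nd : ~~ difflab ell (x, x) by rewrite /difflab eqxx.
exists (fun p => if p == (x, x) then w else P0 p); split.
  exact: update_policy.
exists [::]; split; last by rewrite /diag /= eqxx.
split => // q; rewrite inE => /eqP ->; split; first by case: HB.
move=> r; rewrite eqxx /Defs.support /w ffunE.
case: (r.1 =P r.2) => [E _|_ /eqP //]; rewrite E; by case: HB.
Qed.
Lemma step_good (R : realType) (S L : finType) (tau : S -> {ffun S -> R}) (ell : S -> L)
  (B : rel S) (HB : bisimulation tau ell B) q r w :
  B q.1 q.2 -> coupling (tau q.1) (tau q.2) w ->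
  (forall r', Defs.support w r' -> B r'.1 r'.2) -> 0 < w r ->
  Good tau ell B r -> Good tau ell B q.
Proof.
move=> Bq C Sw wr [P [HP [p [[Hpath Hmem] Hlast]]]].
have [Hin|Hnin] := boolP (q \in r :: p).
  set s := r :: p in Hin.
  set i := index q s.
  have E : s = take i s ++ nth q s i :: drop i.+1 s.
    by rewrite -drop_nth ?index_mem // cat_take_drop.
  rewrite nth_index // in E.
  exists P; split => //; exists (drop i.+1 s); split; last first.
    have Hl : last r s = last q (drop i.+1 s) by rewrite [in LHS]E last_cat.
    by rewrite -Hl.
  split.
    have Hs : sorted (fun a b => 0 < P a b) (take i s ++ q :: drop i.+1 s).
      by rewrite -E.
    by case: (cat_sorted2 Hs).
  move=> q' Hq'; apply: Hmem; by rewrite -/s E mem_cat Hq' orbT.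
exists (fun p0 => if p0 == q then w else P p0); split.
  apply: update_policy => //.
  by case: HB => _ /(_ _ _ Bq) [E _]; rewrite /difflab E eqxx.
exists (r :: p); split => //; split.
  rewrite /= eqxx wr /=.
  rewrite (@eq_in_path _ (mem (r :: p)) _ (fun a b => 0 < P a b)) //.
  move=> a b Ha _ /=; case: eqP => // Eaq.
  by move: Hnin; rewrite -Eaq Ha.
  by apply/allP => ?.
move=> q'; rewrite inE; case: eqP => [->|Ne] /=.
  by move=> _; split => // r'; rewrite eqxx; apply: Sw.
move=> Hq'; have := Hmem q' Hq'; case: (q' =P q) => // E; by exfalso; apply: Ne.
Qed.
Lemma pos_term (R : realType) (X : finType) (F : X -> R) :
  0 < \sum_x F x -> exists x, 0 < F x.
Proof.
move=> H; apply: NNPP => Hn.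
have H0 : \sum_x F x <= \sum_(x : X) (0 : R).
  apply: ler_sum => x _.
  by rewrite leNgt; apply/negP => h; apply: Hn; exists x.
by move: H0; rewrite big1_eq leNgt H.
Qed.

Lemma robust_good (R : realType) (S L : finType) (tau : S -> {ffun S -> R}) (ell : S -> L)
  (Hd : forall s, is_distr (tau s)) (B : rel S) (HB : bisimulation tau ell B)
  (Hlo : forall s t, robust tau ell s t -> B s t) P :
  policy tau ell P -> forall q, reach_as P (@diag S) q -> Good tau ell B q.
Proof.
move=> HP q Hq.
have HPd := policy_distr HP.
have rB : forall q, reach_as P (@diag S) q -> B q.1 q.2.
  by move=> [a b] H; apply: Hlo; exists P.
have sB : forall q r, ~~ diag q -> reach_as P (@diag S) q -> Defs.support (P q) r -> B r.1 r.2.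
  move=> q0 r nd H Hs; apply: rB; apply: (reach_succ HPd nd H).
  rewrite lt0r; apply/andP; split; [exact: Hs | by case: (HPd q0)].
have [n Hn] := Hq (1/2) ltac:(lra).
have : 0 < reachn P (@diag S) n q by lra.
move: Hq {Hn}; elim: n q => [|n IH] q Hq /=; case Dq: (diag q).
- by move=> _; apply: good_diag => //; case: HB.
- by rewrite ltxx.
- by move=> _; apply: good_diag => //; case: HB.
move=> /pos_term [r Hr].
have Pqr : 0 < P q r.
  rewrite lt0r; apply/andP; split; last by case: (HPd q).
  by apply/eqP => E; move: Hr; rewrite E mul0r ltxx.
have Hr2 : 0 < reachn P (@diag S) n r.
  by move: Hr; rewrite pmulr_rgt0.
have Hrr : reach_as P (@diag S) r by apply: (reach_succ HPd _ Hq Pqr); rewrite Dq.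
have Gr := IH r Hrr Hr2.
have := HP q; case: ifP => Dl.
  move=> E; move: Pqr; rewrite E ffunE; case: (r =P q) => [E'|_].
    by rewrite -E'.
  by rewrite ltxx.
move=> C; apply: (step_good HB (rB q Hq) C _ Pqr Gr).
by move=> r'; apply: sB => //; rewrite Dq.
Qed.
Lemma coupling_le_l (R : realType) (S : finType) (mu nu : {ffun S -> R}) W a b :
  coupling mu nu W -> W (a, b) <= mu a.
Proof.
move=> [[W0 _] [H1 _]]; rewrite -H1 (bigD1 b) //= lerDl.
by apply: sumr_ge0 => ? _.
Qed.

Lemma rob_B (R : realType) (S L : finType) (tau : S -> {ffun S -> R}) (ell : S -> L)
  (B : rel S) (Hlo : forall s t, robust tau ell s t -> B s t) P :
  policy tau ell P -> forall q, reach_as P (@diag S) q -> B q.1 q.2.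
Proof. by move=> HP [a b] H; apply: Hlo; exists P. Qed.

Lemma rob_sB (R : realType) (S L : finType) (tau : S -> {ffun S -> R}) (ell : S -> L)
  (B : rel S) (Hlo : forall s t, robust tau ell s t -> B s t) P :
  policy tau ell P -> forall q r, ~~ diag q -> reach_as P (@diag S) q ->
  P q r != 0 -> B r.1 r.2.
Proof.
move=> HP q0 r nd H Hs; have HPd := policy_distr HP.
apply: (rob_B Hlo HP); apply: (reach_succ HPd nd H).
rewrite lt0r; apply/andP; split; [exact: Hs | by case: (HPd q0)].
Qed.

Lemma Bequiv (R : realType) (S L : finType) (tau : S -> {ffun S -> R}) (ell : S -> L)
  (B : rel S) (HB : bisimulation tau ell B) : equivalence B.
Proof. by case: HB. Qed.

Lemma B_nodiff (R : realType) (S L : finType) (tau : S -> {ffun S -> R}) (ell : S -> L)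
  (B : rel S) (HB : bisimulation tau ell B) q : B q.1 q.2 -> ~~ difflab ell q.
Proof. by case: HB => _ H /H [E _]; rewrite /difflab E eqxx. Qed.

Lemma policy_coupling (R : realType) (S L : finType) (tau : S -> {ffun S -> R}) (ell : S -> L)
  P q : policy tau ell P -> ~~ difflab ell q -> coupling (tau q.1) (tau q.2) (P q).
Proof. by move=> HP nd; have := HP q; rewrite (negPf nd). Qed.

Lemma policy_diff (R : realType) (S L : finType) (tau : S -> {ffun S -> R}) (ell : S -> L)
  P q r : policy tau ell P -> difflab ell q -> 0 < P q r -> r = q.
Proof.
move=> HP d; have := HP q; rewrite d => ->; rewrite ffunE.
by case: (r =P q) => // _; rewrite ltxx.
Qed.

Lemma left_robust (R : realType) (S L : finType) (tau : S -> {ffun S -> R}) (ell : S -> L)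
  (Hd : forall s, is_distr (tau s)) (B : rel S) (HB : bisimulation tau ell B)
  (Hlo : forall s t, robust tau ell s t -> B s t) P Q :
  policy tau ell P -> policy tau ell Q ->
  forall p y z, supports B Q (y, z) p -> diag (last (y, z) p) ->
  forall x, reach_as P (@diag S) (x, y) -> Good tau ell B (x, z).
Proof.
move=> HP HQ; have HPd := policy_distr HP.
have [Brefl [Bsym Btr]] := Bequiv HB.
elim=> [|[y1 z1] p IH] y z Hs Hl x Hx.
  move: Hl; rewrite /diag /= => /eqP <-.
  exact: (robust_good Hd HB Hlo HP).
case: Hs => Hpath Hmem.
move: Hpath => /= /andP [Qpos Hpath].
have Hs1 : supports B Q (y1, z1) p.
  by split => // q Hq; apply: Hmem; rewrite inE Hq orbT.
have [Byz Syz] := Hmem (y, z) (mem_head _ _).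
have [Exy|Nxy] := eqVneq x y.
  subst x; exists Q; split => //; exists ((y1, z1) :: p); split => //.
  by split => //=; rewrite Qpos.
have [Dl|nDl] := boolP (difflab ell (y, z)).
  have [E1 E2] : y1 = y /\ z1 = z.
    by have := policy_diff HQ Dl Qpos; case.
  subst; exact: (IH y z Hs1 Hl x Hx).
have CQ := policy_coupling HQ nDl.
have Bxy := rob_B Hlo HP Hx.
have CP := policy_coupling HP (B_nodiff HB Bxy).
have ty : 0 < tau y y1 by apply: lt_le_trans Qpos (coupling_le_l _ _ CQ).
move: ty; rewrite -(proj2 (proj2 CP) y1) => /pos_term [x1 Px1].
have ndxy : ~~ diag (x, y) by rewrite /diag /= Nxy.
have Hx1 : reach_as P (@diag S) (x1, y1) by apply: (reach_succ HPd ndxy Hx Px1).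
have G1 := IH y1 z1 Hs1 Hl x1 Hx1.
have [w [Cw [Sw Pw]]] := glue CP CQ (Hd x).
apply: (@step_good _ _ _ tau ell B HB (x, z) (x1, z1) w (Btr _ _ _ Bxy Byz) Cw _ (Pw _ _ _ Px1 Qpos) G1).
case=> a c /Sw [b [h1 h2]].
apply: (Btr _ b).
  exact: (rob_sB Hlo HP ndxy Hx h1).
exact: (Syz (b, c) h2).
Qed.
Lemma right_robust (R : realType) (S L : finType) (tau : S -> {ffun S -> R}) (ell : S -> L)
  (Hd : forall s, is_distr (tau s)) (B : rel S) (HB : bisimulation tau ell B)
  (Hlo : forall s t, robust tau ell s t -> B s t) P Q :
  policy tau ell P -> policy tau ell Q ->
  forall p x y, supports B Q (x, y) p -> diag (last (x, y) p) ->
  forall z, reach_as P (@diag S) (y, z) -> Good tau ell B (x, z).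
Proof.
move=> HP HQ; have HPd := policy_distr HP.
have [Brefl [Bsym Btr]] := Bequiv HB.
elim=> [|[x1 y1] p IH] x y Hs Hl z Hz.
  move: Hl; rewrite /diag /= => /eqP ->.
  exact: (robust_good Hd HB Hlo HP).
case: Hs => Hpath Hmem.
move: Hpath => /= /andP [Qpos Hpath].
have Hs1 : supports B Q (x1, y1) p.
  by split => // q Hq; apply: Hmem; rewrite inE Hq orbT.
have [Bxy Sxy] := Hmem (x, y) (mem_head _ _).
have [Eyz|Nyz] := eqVneq y z.
  subst z; exists Q; split => //; exists ((x1, y1) :: p); split => //.
  by split => //=; rewrite Qpos.
have [Dl|nDl] := boolP (difflab ell (x, y)).
  have [E1 E2] : x1 = x /\ y1 = y.
    by have := policy_diff HQ Dl Qpos; case.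
  subst; exact: (IH x y Hs1 Hl z Hz).
have CQ := policy_coupling HQ nDl.
have Byz := rob_B Hlo HP Hz.
have CP := policy_coupling HP (B_nodiff HB Byz).
have ty : 0 < tau y y1 by apply: lt_le_trans Qpos (coupling_le_r _ _ CQ).
move: ty; rewrite -(proj1 (proj2 CP) y1) => /pos_term [z1 Pz1].
have ndyz : ~~ diag (y, z) by rewrite /diag /= Nyz.
have Hz1 : reach_as P (@diag S) (y1, z1) by apply: (reach_succ HPd ndyz Hz Pz1).
have G1 := IH x1 y1 Hs1 Hl z1 Hz1.
have [w [Cw [Sw Pw]]] := glue CQ CP (Hd x).
apply: (@step_good _ _ _ tau ell B HB (x, z) (x1, z1) w (Btr _ _ _ Bxy Byz) Cw _ (Pw _ _ _ Qpos Pz1) G1).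
case=> a c /Sw [b [h1 h2]].
apply: (Btr _ b).
  exact: (Sxy (a, b) h1).
exact: (rob_sB Hlo HP ndyz Hz h2).
Qed.

Unset Implicit Arguments.

Theorem proposition7 (R : realType) (S L : finType)
  (tau : S -> {ffun S -> R}) (ell : S -> L)
  (tau_distr : forall s, is_distr (tau s))
  (two_labels : (2 <= #|[set ell s | s in S]|)%N)
  (B : rel S)
  (HB : bisimulation tau ell B)
  (Hlo : forall s t, robust tau ell s t -> B s t)
  (Hhi : forall s t, B s t -> bisimilar tau ell s t) :
  forall s t u, Filter tau ell B s t -> Filter tau ell B t u ->
    (robust tau ell s t \/ robust tau ell t u) ->
    Filter tau ell B s u.
Proof.
move=> s t u [Bst Gst] [Btu Gtu] Hr.
have [Brefl [Bsym Btr]] := Bequiv HB.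
split; first exact: (Btr _ _ _ Bst Btu).
case: Hr => [[P [HP Hx]]|[P [HP Hx]]].
  case: Gtu => Q [HQ [p [Hs Hl]]].
  exact: (left_robust tau_distr HB Hlo HP HQ Hs Hl Hx).
case: Gst => Q [HQ [p [Hs Hl]]].
exact: (right_robust tau_distr HB Hlo HP HQ Hs Hl Hx).
Qed.
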